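(* Let $\Gamma=A\ast B$ with $A,B$ non-trivial, let $\varepsilon>0$ and let $(G,d)$ be a group with a bi-invariant metric without $\varepsilon$-small subgroups. Let $\mu_A:A\to G$, $\mu_B:B\to G$ be bounded alternating maps with $\delta:=\max\{\|\mu_A\|_\infty,\|\mu_B\|_\infty\}\leq\varepsilon/2$. Then the split quasi-representation $\mu=\mu_A\ast\mu_B:\Gamma\to G$ satisfies $D(\mu)\geq\delta$.
   Context: $G$ has no $\varepsilon$-small subgroups if the open $\varepsilon$-ball around the identity $e$ contains no non-trivial subgroup. For maps $f_1,f_2:X\to G$, $d(f_1,f_2)=\sup_x d(f_1(x),f_2(x))$, and $\|f\|_\infty=d(f,e)$ (distance to the constant map $e$); $f$ is bounded if this is finite. Alternating means $\mu(x^{-1})=\mu(x)^{-1}$. Each $1\neq g\in A\ast B$ has a unique normal form $g=a_1b_1\cdots a_nb_n$ ($a_i\in A$, $b_i\in B$, all non-trivial except possibly $a_1$ or $b_n$), and $(\mu_A\ast\mu_B)(1)=e$, $(\mu_A\ast\mu_B)(a_1b_1\cdots a_nb_n)=\mu_A(a_1)\mu_B(b_1)\cdots\mu_A(a_n)\mu_B(b_n)$. $D(\mu)=\inf\{d(\mu,\rho):\rho\in\mathrm{Hom}(\Gamma,G)\}$. *)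

(* Defs.v *)
From HB Require Import structures.
From mathcomp Require Import all_boot all_order all_algebra.
From mathcomp Require Import boolp classical_sets reals constructive_ereal ereal.
Set Implicit Arguments. Unset Strict Implicit. Unset Printing Implicit Defensive.
Import Order.TTheory GRing.Theory Num.Theory.
Local Open Scope classical_set_scope.
Local Open Scope ring_scope.

Record group := Group {
  gcar :> Type;
  gmul : gcar -> gcar -> gcar;
  ginv : gcar -> gcar;
  gone : gcar;
  gmulA : forall x y z, gmul x (gmul y z) = gmul (gmul x y) z;
  gmul1 : forall x, gmul gone x = x;
  gmulV : forall x, gmul (ginv x) x = gone }.

Arguments gmul {g}. Arguments ginv {g}. Arguments gone {g}.

Definition nontrivial (A : group) : Prop := exists a : A, a <> gone.

Definition bi_invariant_metric (R : realType) (G : group) (d : G -> G -> R) : Prop :=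
  (forall x y, d x y = 0 <-> x = y) /\
  (forall x y, d x y = d y x) /\
  (forall x y z, d x z <= d x y + d y z) /\
  (forall g x y, d (gmul g x) (gmul g y) = d x y) /\
  (forall g x y, d (gmul x g) (gmul y g) = d x y).

Definition is_subgroup (G : group) (H : set G) : Prop :=
  H gone /\ (forall x y, H x -> H y -> H (gmul x y)) /\ (forall x, H x -> H (ginv x)).

Definition no_small_subgroups (R : realType) (G : group) (d : G -> G -> R) (eps : R) : Prop :=
  forall H : set G, is_subgroup H -> (forall h, H h -> d h gone < eps) -> H = [set gone].

Definition alternating (X G : group) (f : X -> G) : Prop :=
  forall x, f (ginv x) = ginv (f x).

Definition supdist (R : realType) (X : Type) (D : set X) (G : group) (d : G -> G -> R)
  (f1 f2 : X -> G) : \bar R :=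
  ereal_sup [set (d (f1 x) (f2 x))%:E | x in D].

Definition supnorm (R : realType) (X : Type) (G : group) (d : G -> G -> R) (f : X -> G) : \bar R :=
  supdist setT d f (fun _ => gone).

(** The free product A * B, realised as reduced words. *)
Section FreeProduct.
Variables A B : group.
Definition letter := (A + B)%type.

Definition nontriv_letter (x : letter) : Prop :=
  match x with inl a => a <> gone | inr b => b <> gone end.

Definition same_factor (x y : letter) : Prop :=
  match x, y with inl _, inl _ => True | inr _, inr _ => True | _, _ => False end.

Fixpoint reduced (w : seq letter) : Prop :=
  match w with
  | [::] => True
  | x :: w' => nontriv_letter x /\
      (match w' with [::] => True | y :: _ => ~ same_factor x y end) /\ reduced w'
  end.

Definition push (x : letter) (w : seq letter) : seq letter :=
  match x with
  | inl a =>
      match w with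
      | inl a' :: w' => if pselect (gmul a a' = gone) then w' else inl (gmul a a') :: w'
      | _ => if pselect (a = gone) then w else inl a :: w
      end
  | inr b =>
      match w with
      | inr b' :: w' => if pselect (gmul b b' = gone) then w' else inr (gmul b b') :: w'
      | _ => if pselect (b = gone) then w else inr b :: w
      end
  end.

Definition wmul (w1 w2 : seq letter) : seq letter := foldr push w2 w1.

Definition is_hom (G : group) (rho : seq letter -> G) : Prop :=
  forall w1 w2, reduced w1 -> reduced w2 -> rho (wmul w1 w2) = gmul (rho w1) (rho w2).

Definition split_map (G : group) (muA : A -> G) (muB : B -> G) (w : seq letter) : G :=
  foldr (fun x acc => gmul (match x with inl a => muA a | inr b => muB b end) acc) gone w.

Definition Dist (R : realType) (G : group) (d : G -> G -> R) (mu : seq letter -> G) : \bar R :=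
  ereal_inf [set supdist reduced d mu rho | rho in is_hom (G:=G)].
End FreeProduct.

(* Main.v *)
Require Import Defs.
From mathcomp Require Import all_boot all_order all_algebra.
From mathcomp Require Import boolp classical_sets reals constructive_ereal ereal.
Import Order.TTheory GRing.Theory Num.Theory.
Local Open Scope classical_set_scope.
Local Open Scope ring_scope.

Section GroupLemmas.
Variable G : group.
Lemma gmulVr (x : G) : gmul x (ginv x) = gone.
Proof.
have -> : gmul x (ginv x) = gmul (gmul (ginv (ginv x)) (ginv x)) (gmul x (ginv x))
  by rewrite gmulV gmul1.
by rewrite -gmulA (gmulA (ginv x) x) gmulV gmul1 gmulV.
Qed.
Lemma gmul1r (x : G) : gmul x gone = x.
Proof. by rewrite -(gmulV x) gmulA gmulVr gmul1. Qed.
Lemma gcancel (g x y : G) : gmul g x = gmul g y -> x = y.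
Proof. by move=> h; rewrite -(gmul1 x) -(gmul1 y) -(gmulV g) -!gmulA h. Qed.
Lemma gidem (x : G) : gmul x x = x -> x = gone.
Proof. by rewrite -{3}(gmul1r x) => /gcancel. Qed.
Lemma ginv1 : ginv (gone : G) = gone.
Proof. by rewrite -{2}(gmulV gone) gmul1r. Qed.
End GroupLemmas.

Lemma metric0 (R : realType) (G : group) (d : G -> G -> R) :
  bi_invariant_metric d -> forall x, d x x = 0.
Proof. by move=> [h _] x; apply/h. Qed.

Lemma metric_ge0 (R : realType) (G : group) (d : G -> G -> R) :
  bi_invariant_metric d -> forall x y, 0 <= d x y.
Proof.
move=> hd x y; have := (hd.2.2.1 x y x); rewrite metric0 // hd.2.1 => h.
by rewrite -(@pmulr_rge0 _ 2) //; rewrite mulr2n mulrDl !mul1r.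
Qed.

Lemma key (R : realType) (X G : group) (d : G -> G -> R) (eps : R)
  (f h : X -> G) (r : R) :
  0 < eps -> bi_invariant_metric d -> no_small_subgroups d eps -> alternating f ->
  (forall x y, h (gmul x y) = gmul (h x) (h y)) ->
  (forall x, x <> gone -> d (f x) (h x) <= r) -> 0 <= r -> r < eps / 2 ->
  (supnorm d f <= (eps / 2)%:E)%E ->
  (supnorm d f <= r%:E)%E.
Proof.
move=> eps0 hd hns halt hh hr r0 reps hsup.
have fb : forall x, d (f x) gone <= eps / 2.
  move=> x; rewrite -lee_fin; apply: le_trans hsup.
  by apply: ereal_sup_ubound; exists x.
have h1 : h gone = gone by apply: gidem; rewrite -hh gmul1.
have hinv : forall x, h (ginv x) = ginv (h x).
  move=> x; apply: (@gcancel _ (h x)); rewrite gmulVr -hh.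
  by rewrite gmulVr h1.
have H : range h = [set gone].
  apply: hns.
  - split; first by exists gone.
    split; first by move=> _ _ [a _ <-] [b _ <-]; exists (gmul a b).
    by move=> _ [a _ <-]; exists (ginv a).
  - move=> _ [x _ <-].
    have [->|xn] := pselect (x = gone); first by rewrite h1 metric0 //.
    apply: (le_lt_trans (hd.2.2.1 _ (f x) _)).
    rewrite hd.2.1; apply: (@le_lt_trans _ _ (r + eps / 2)).
      by apply: lerD; [exact: hr | exact: fb].
    by rewrite [X in _ < X](splitr eps) ltrD2r.
have hx : forall x, h x = gone.
  move=> x; have : range h (h x) by exists x.
  by rewrite H.
have fe : f gone = gone.
  have finv : ginv (f gone) = f gone by rewrite -halt ginv1.
  have : [set z | z = gone \/ z = f gone] = [set gone].
    apply: hns.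
    - split; first by left.
      split.
        move=> x y [->|->] [->|->].
        - by left; rewrite gmul1.
        - by right; rewrite gmul1.
        - by right; rewrite gmul1r.
        - by left; rewrite -[X in gmul X _]finv gmulV.
      by move=> x [->|->]; [left; rewrite ginv1 | right].
    - move=> z [->|->]; first by rewrite metric0.
      by apply: le_lt_trans (fb _) _; rewrite ltr_pdivrMr // ltr_pMr // ltr1n.
  move=> E; have : [set z | z = gone \/ z = f gone] (f gone) by right.
  by rewrite E.
apply/ereal_supP => _ [x _ <-]; rewrite lee_fin.
have [->|xn] := pselect (x = gone); first by rewrite fe metric0.
by rewrite -(hx x); exact: hr.
Qed.

Lemma pifT (P : Prop) T (a b : T) : P -> (if pselect P then a else b) = a.
Proof. by move=> p; case: pselect. Qed.
Lemma pifF (P : Prop) T (a b : T) : ~ P -> (if pselect P then a else b) = b.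
Proof. by move=> p; case: pselect. Qed.
Arguments pifT {P T a b}. Arguments pifF {P T a b}.

Theorem theorem4p2 (R : realType) (A B G : group) (d : G -> G -> R) (eps : R)
  (muA : A -> G) (muB : B -> G) :
  nontrivial A -> nontrivial B -> 0 < eps ->
  bi_invariant_metric d -> no_small_subgroups d eps ->
  alternating muA -> alternating muB ->
  (supnorm d muA < +oo)%E -> (supnorm d muB < +oo)%E ->
  (maxe (supnorm d muA) (supnorm d muB) <= (eps / 2)%:E)%E ->
  (maxe (supnorm d muA) (supnorm d muB) <= Dist d (split_map muA muB))%E.
Proof.
move=> _ _ eps0 hd hns haA haB _ _ hmax.
apply/ereal_infP => _ [rho hrho <-].
set S := supdist _ _ _ _.
case: (boolP (S < maxe (supnorm d muA) (supnorm d muB))%E) => [Slt|]; last by rewrite -leNgt.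
have rho0 : rho [::] = gone.
  by apply: gidem; rewrite -(hrho [::] [::]).
have S0 : (0 <= S)%E.
  apply: (@le_trans _ _ (d (split_map muA muB [::]) (rho [::]))%:E).
    by rewrite lee_fin (@metric_ge0 R G d hd).
  by apply: ereal_sup_ubound; exists [::].
have Sfin : S \is a fin_num.
  by rewrite ge0_fin_numE // (lt_le_trans Slt) // (le_trans hmax) // leey.
have Seps : fine S < eps / 2.
  by rewrite -lte_fin fineK // (lt_le_trans Slt).
have Sr : forall w, reduced w -> d (split_map muA muB w) (rho w) <= fine S.
  move=> w hw; rewrite -lee_fin fineK //.
  by apply: ereal_sup_ubound; exists w.
have [hA hB] : (supnorm d muA <= (eps/2)%:E /\ supnorm d muB <= (eps/2)%:E)%E.
  by move: hmax; rewrite ge_max => /andP.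
apply: (@le_trans _ _ (fine S)%:E); last by rewrite fineK.
rewrite ge_max; apply/andP; split.
- apply: (@key R A G d eps muA (fun a => rho (if pselect (a = gone) then [::] else [:: inl a])))
    => //; last by rewrite -lee_fin fineK.
  + move=> x y.
    have [->|xn] := pselect (x = gone).
      by rewrite gmul1 (pifT (erefl gone)) rho0 gmul1.
    have [->|yn] := pselect (y = gone).
      by rewrite gmul1r (pifT (erefl gone)) rho0 gmul1r.
    rewrite (pifF xn) (pifF yn) -hrho //=; by [].
  + move=> x xn; rewrite (pifF xn).
    by have := Sr [:: inl x]; rewrite /split_map /= gmul1r; apply.
- apply: (@key R B G d eps muB (fun a => rho (if pselect (a = gone) then [::] else [:: inr a])))
    => //; last by rewrite -lee_fin fineK.
  + move=> x y.
    have [->|xn] := pselect (x = gone).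
      by rewrite gmul1 (pifT (erefl gone)) rho0 gmul1.
    have [->|yn] := pselect (y = gone).
      by rewrite gmul1r (pifT (erefl gone)) rho0 gmul1r.
    rewrite (pifF xn) (pifF yn) -hrho //=; by [].
  + move=> x xn; rewrite (pifF xn).
    by have := Sr [:: inr x]; rewrite /split_map /= gmul1r; apply.
Qed.
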